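(* Let $E_1|H_1$, $E_2|H_2$, $E_3|H_3$ be conditional events with $\{E_1|H_1,E_2|H_2\}$ p-consistent. Then the quasi conjunction $QC(E_1|H_1,E_2|H_2)$ p-entails $E_3|H_3$ if and only if $(E_3|H_3)|QC(E_1|H_1,E_2|H_2)=1$. *)

(* Defs.v *)
From HB Require Import structures.
From mathcomp Require Import all_boot all_order all_algebra.
Set Implicit Arguments. Unset Strict Implicit. Unset Printing Implicit Defensive.
Import Order.TTheory GRing.Theory Num.Theory.
Local Open Scope ring_scope.

Section Framework.
Variables (R : realFieldType) (Omega : finType).

Record cevent := CEvent { ev : {set Omega}; cond : {set Omega} }.

(* Betting-scheme coherence of a prevision assessment p on a finite family of
   conditional random quantities X_i | H_i (the values X_i may depend on the
   assessment; they are supplied already evaluated). *)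
Definition coherent (n : nat) (X : 'I_n -> Omega -> R) (H : 'I_n -> {set Omega})
    (p : 'I_n -> R) : Prop :=
  forall s : 'I_n -> R, (exists i, s i != 0) ->
    let G := fun w => \sum_(i < n) s i * ((w \in H i)%:R * (X i w - p i)) in
    (exists2 w, [exists i, (s i != 0) && (w \in H i)] & G w <= 0) /\
    (exists2 w, [exists i, (s i != 0) && (w \in H i)] & 0 <= G w).

Definition ce_coherent (n : nat) (F : 'I_n -> cevent) (p : 'I_n -> R) : Prop :=
  coherent (fun i w => (w \in ev (F i))%:R) (fun i => cond (F i)) p.

Definition p_consistent (n : nat) (F : 'I_n -> cevent) : Prop :=
  ce_coherent F (fun _ => 1).

Definition ext_family (n : nat) (F : 'I_n -> cevent) (G : cevent) (i : 'I_n.+1)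
  : cevent :=
  match unlift ord_max i with Some j => F j | None => G end.

Definition p_entails (n : nat) (F : 'I_n -> cevent) (G : cevent) : Prop :=
  p_consistent F /\
  forall p : 'I_n.+1 -> R, ce_coherent (ext_family F G) p ->
    (forall j : 'I_n, p (lift ord_max j) = 1) -> p ord_max = 1.

Definition quasi_conj (c1 c2 : cevent) : cevent :=
  CEvent ((ev c1 :|: ~: cond c1) :&: (ev c2 :|: ~: cond c2))
         (cond c1 :|: cond c2).

(* Value of the conditional event c = A|H in constituent w, given P(A|H) = x:
   1 on AH, 0 on ~A H, x on ~H. *)
Definition ce_val (c : cevent) (x : R) (w : Omega) : R :=
  if w \in cond c then (w \in ev c)%:R else x.

(* Conjunction (A|H) /\ (B|K) given P(A|H)=x, P(B|K)=y, P(conj)=z: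
   1 on AHBK, 0 on ~AH or ~BK, x on ~H BK, y on AH ~K, z on ~H ~K. *)
Definition conj_val (a b : cevent) (x y z : R) (w : Omega) : R :=
  if w \in cond a then
    (if w \in ev a then (if w \in cond b then (w \in ev b)%:R else y) else 0)
  else
    (if w \in cond b then (if w \in ev b then x else 0) else z).

Definition neg_val (a : cevent) (x : R) (w : Omega) : R :=
  if w \in cond a then (w \notin ev a)%:R else 1 - x.

(* Iterated conditional (B|K)|(A|H) = (B|K) /\ (A|H) + mu (~A|H),
   where mu = P[(B|K)|(A|H)]. *)
Definition iter_val (b a : cevent) (x y z mu : R) (w : Omega) : R :=
  conj_val a b x y z w + mu * neg_val a x w.

(* The conjunction is conditioned on H \/ K; the bet on the
   iterated conditional is called off where its conditioning conditional
   event A|H takes value 0. *)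
Definition iter_family_val (b a : cevent) (x y z mu : R) (i : 'I_4) (w : Omega) : R :=
  match val i with
  | 0 => (w \in ev a)%:R
  | 1 => (w \in ev b)%:R
  | 2 => conj_val a b x y z w
  | _ => iter_val b a x y z mu w
  end.

Definition iter_family_cond (b a : cevent) (x : R) (i : 'I_4) : {set Omega} :=
  match val i with
  | 0 => cond a
  | 1 => cond b
  | 2 => cond a :|: cond b
  | _ => [set w | ce_val a x w != 0]
  end.

Definition iter_coherent (b a : cevent) (x y z mu : R) : Prop :=
  coherent (iter_family_val b a x y z mu) (iter_family_cond b a x)
           (fun i => nth 0 [:: x; y; z; mu] i).

Definition iter_eq1 (b a : cevent) : Prop :=
  forall x y z mu : R, iter_coherent b a x y z mu ->
    forall w : Omega, iter_val b a x y z mu w = 1.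

End Framework.

(* Main.v *)
Require Import Defs.
From HB Require Import structures.
From mathcomp Require Import all_boot all_order all_algebra.
From mathcomp Require Import ring lra.
From Stdlib Require Import Classical.
Import Order.TTheory GRing.Theory Num.Theory.
Local Open Scope ring_scope.

Section Proofs.
Variables (R : realFieldType) (Omega : finType).

Lemma coh_uv n (X : 'I_n -> Omega -> R) (H : 'I_n -> {set Omega}) (p : 'I_n -> R) (P : pred 'I_n) u v :
 (forall j, u \in H j -> X j u = p j) ->
 (forall i, P i -> u \in H i) ->
 (forall i, ~~ P i -> v \in H i) ->
 (forall j, ~~ P j -> v \in H j -> X j v = p j) ->
 coherent X H p.
Proof.
move=> uz uH vH vz s [i si].
have key: exists2 w, [exists i, (s i != 0) && (w \in H i)] & \sum_(i < n) s i * ((w \in H i)%:R * (X i w - p i)) = 0.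
  case: (boolP [exists j, P j && (s j != 0)]) => [/existsP [j /andP [Pj sj]]|/existsPn nP].
  - exists u; first by apply/existsP; exists j; rewrite sj uH.
    apply: big1 => k _; case: (boolP (u \in H k)) => hk; first by rewrite uz // subrr !mulr0.
    by rewrite mul0r mulr0.
  - have Pi : ~~ P i by move: (nP i); rewrite si andbT.
    exists v; first by apply/existsP; exists i; rewrite si vH.
    apply: big1 => k _; case: (boolP (P k)) => Pk.
      by move: (nP k); rewrite Pk /= negbK => /eqP ->; rewrite mul0r.
    case: (boolP (v \in H k)) => hk; first by rewrite vz // subrr !mulr0.
    by rewrite mul0r mulr0.
case: key => w hw G0; split; exists w => //; rewrite G0 //.
Qed.

Lemma ext1 (F : 'I_1 -> cevent Omega) G (i : 'I_2) :
  ext_family F G i = if val i == 1%N then G else F ord0.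
Proof.
case: i => [[|[|//]] Hi] /=.
  have -> : Ordinal Hi = lift ord_max ord0 by apply: val_inj.
  by rewrite /ext_family liftK.
have -> : Ordinal Hi = ord_max by apply: val_inj.
by rewrite /ext_family unlift_none.
Qed.

Lemma sum4 (f : 'I_4 -> R) : \sum_(i < 4) f i = f (@Ordinal 4 0 isT) + f (@Ordinal 4 1 isT) + f (@Ordinal 4 2 isT) + f (@Ordinal 4 3 isT).
Proof.
rewrite !big_ord_recl big_ord0 addr0 !addrA; congr (_ + _ + _ + _); congr f; exact: val_inj.
Qed.


Lemma sum2 (f : 'I_2 -> R) : \sum_(i < 2) f i = f (@Ordinal 2 0 isT) + f (@Ordinal 2 1 isT).
Proof.
rewrite !big_ord_recl big_ord0 addr0; congr (_ + _); congr f; exact: val_inj.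
Qed.

Lemma tR : (true%:R : R) = 1. Proof. by []. Qed.
Lemma fR : (false%:R : R) = 0. Proof. by []. Qed.

Definition Cond (a b : cevent Omega) : Prop :=
  (forall w, w \in cond b -> w \in ev b) \/
  ((forall w, w \in cond a -> w \in ev a -> (w \in cond b) && (w \in ev b)) /\
   (forall w, w \in cond b -> w \notin ev b -> (w \in cond a) && (w \notin ev a))).

Lemma tri (a b : cevent Omega) :
 Cond a b \/ (exists w, [&& w \in cond a, w \in ev a, w \in cond b & w \notin ev b])
   \/ (exists w1 w2, [&& w1 \in cond a, w1 \in ev a & w1 \notin cond b] /\ (w2 \in cond b) && (w2 \notin ev b))
   \/ (exists w, [&& w \notin cond a, w \in cond b & w \notin ev b]).
Proof.
case: (classic (exists w, [&& w \in cond a, w \in ev a, w \in cond b & w \notin ev b])) => [h|n1]; first by right; left.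
case: (classic (exists w, [&& w \notin cond a, w \in cond b & w \notin ev b])) => [h|n3]; first by do 3 right.
case: (classic (exists w2, (w2 \in cond b) && (w2 \notin ev b))) => [[w2 h2]|n2]; last first.
  left; left => w wK; apply/negPn/negP => wB; apply: n2; exists w; by rewrite wK wB.
case: (classic (exists w1, [&& w1 \in cond a, w1 \in ev a & w1 \notin cond b])) => [[w1 h1]|n4].
  by right; right; left; exists w1, w2.
left; right; split.
- move=> w wH wA; case wK: (w \in cond b).
    case wB: (w \in ev b) => //; exfalso; apply: n1; exists w; by rewrite wH wA wK wB.
  exfalso; apply: n4; exists w; by rewrite wH wA wK.
- move=> w wK wB; case wH: (w \in cond a).
    case wA: (w \in ev a) => //; exfalso; apply: n1; exists w; by rewrite wH wA wK.
  exfalso; apply: n3; exists w; by rewrite wH wK.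
Qed.

Lemma pc_ex (c1 c2 : cevent Omega) :
  p_consistent R (fun i : 'I_2 => if val i == 0%N then c1 else c2) ->
  exists w, w \in cond (quasi_conj c1 c2) /\ w \in ev (quasi_conj c1 c2).
Proof.
move=> hpc.
case: (hpc (fun _ => 1)) => [|_ [w /existsP [i /andP [_ wi]] Gw]]; first by exists ord0; rewrite oner_neq0.
rewrite sum2 /= in Gw.
exists w; rewrite /quasi_conj /= !inE.
move: Gw wi; case: i => [[|[|//]] ?] /=;
case: (w \in cond c1); case: (w \in ev c1); case: (w \in cond c2); case: (w \in ev c2) => //= Gw _; lra.
Qed.

Definition Bad (a b : cevent Omega) : Prop :=
  (exists w, [&& w \in cond a, w \in ev a, w \in cond b & w \notin ev b])
   \/ (exists w1 w2, [&& w1 \in cond a, w1 \in ev a & w1 \notin cond b] /\ (w2 \in cond b) && (w2 \notin ev b))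
   \/ (exists w, [&& w \notin cond a, w \in cond b & w \notin ev b]).

Lemma notP (a b : cevent Omega) (F0 : exists w, w \in cond a /\ w \in ev a) :
  Bad a b -> ~ p_entails R (fun _ : 'I_1 => a) b.
Proof.
move=> bad [_ PE].
have coh : ce_coherent (R:=R) (ext_family (fun _ : 'I_1 => a) b) (fun i : 'I_2 => if val i == 1%N then 0 else 1).
  case: F0 => w0 [w0H w0A].
  case: bad => [[w /and4P [wH wA wK /negbTE wB]] | [[w1 [w2 [/and3P [w1H w1A /negbTE w1K] /andP [w2K /negbTE w2B]]]] | [w /and3P [/negbTE wH wK /negbTE wB]]]].
  - apply: (@coh_uv _ _ _ _ predT w w) => // -[[|[|//]] ?] /=; rewrite ext1 /= ?wA ?wB ?wH ?wK //.
  - apply: (@coh_uv _ _ _ _ (fun i => val i == 0%N) w1 w2) => -[[|[|//]] ?] /=; rewrite ext1 /= ?w1A ?w1K ?w1H ?w2B ?w2K //.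
  - apply: (@coh_uv _ _ _ _ (fun i => val i == 1%N) w w0) => -[[|[|//]] ?] /=; rewrite ext1 /= ?wA ?wB ?wH ?wK ?w0H ?w0A //.
have : (0 : R) = 1.
  apply: (PE _ coh) => j /=; by case: j => [[|//] ?].
by move/eqP; rewrite eq_sym oner_eq0.
Qed.

Ltac unf := rewrite /iter_family_cond /iter_family_val /iter_val /conj_val /neg_val /ce_val /= ?inE.

Lemma notQ (a b : cevent Omega) (F0 : exists w, w \in cond a /\ w \in ev a) :
  Bad a b -> ~ iter_eq1 R b a.
Proof.
move=> bad IE.
case: F0 => w0 [w0H w0A].
case: bad => [[w /and4P [wH wA wK /negbTE wB]] | [[w1 [w2 [/and3P [w1H w1A /negbTE w1K] /andP [w2K /negbTE w2B]]]] | [w /and3P [/negbTE wH wK /negbTE wB]]]].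
- have coh : iter_coherent b a (1:R) 0 0 0.
    apply: (@coh_uv _ _ _ _ predT w w) => // -[[|[|[|[|//]]]] ?] /=; unf; rewrite ?wA ?wB ?wH ?wK /= => *; rewrite ?oner_neq0 //=; lra.
  have := IE _ _ _ _ coh w; unf; rewrite ?wA ?wB ?wH ?wK /= => *; rewrite ?oner_neq0 //=; lra.
- have coh : iter_coherent b a (1:R) 0 0 0.
    apply: (@coh_uv _ _ _ _ (fun i => val i != 1%N) w1 w2) => -[[|[|[|[|//]]]] ?] /=; unf; rewrite ?w1A ?w1K ?w1H ?w2B ?w2K /= => *; rewrite ?oner_neq0 //=; lra.
  have := IE _ _ _ _ coh w1; unf; rewrite ?w1A ?w1K ?w1H /= => *; rewrite ?oner_neq0 //=; lra.
- have coh : iter_coherent b a (1:R) 0 0 0.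
    apply: (@coh_uv _ _ _ _ (fun i => val i != 0%N) w w0) => -[[|[|[|[|//]]]] ?] /=; unf; rewrite ?wA ?wB ?wH ?wK ?w0H ?w0A /= => *; rewrite ?oner_neq0 //=; lra.
  have := IE _ _ _ _ coh w; unf; rewrite ?wA ?wB ?wH ?wK /= => *; rewrite ?oner_neq0 //=; lra.
Qed.

Lemma condP (a b : cevent Omega) (F0 : exists w, w \in cond a /\ w \in ev a) :
  Cond a b -> p_entails R (fun _ : 'I_1 => a) b.
Proof.
move=> C; split.
  case: F0 => w [wH wA]; apply: (@coh_uv _ _ _ _ predT w w) => //= j _; by rewrite wA.
move=> p coh p1.
have {}p1 : p (@Ordinal 2 0 isT) = 1 by rewrite -(p1 ord0); congr p; apply: val_inj.
have -> : ord_max = @Ordinal 2 1 isT by apply: val_inj.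
set q := p (@Ordinal 2 1 isT).
have key : forall s : 'I_2 -> R, s (@Ordinal 2 1 isT) != 0 ->
  (exists2 w, ((s (@Ordinal 2 0 isT) != 0) && (w \in cond a) || (w \in cond b)) &
     s (@Ordinal 2 0 isT) * ((w \in cond a)%:R * ((w \in ev a)%:R - 1)) + s (@Ordinal 2 1 isT) * ((w \in cond b)%:R * ((w \in ev b)%:R - q)) <= 0) /\
  (exists2 w, ((s (@Ordinal 2 0 isT) != 0) && (w \in cond a) || (w \in cond b)) &
     0 <= s (@Ordinal 2 0 isT) * ((w \in cond a)%:R * ((w \in ev a)%:R - 1)) + s (@Ordinal 2 1 isT) * ((w \in cond b)%:R * ((w \in ev b)%:R - q))).
  move=> s s1; case: (coh s) => [|[w hw Gw] [w' hw' Gw']]; first by exists (@Ordinal 2 1 isT).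
  rewrite sum2 !ext1 /= p1 in Gw; rewrite sum2 !ext1 /= p1 in Gw'.
  split; [exists w | exists w'] => //.
    move: hw => /existsP [[[|[|//]] Hi]] /andP [si wi]; rewrite (bool_irrelevance Hi isT) in si wi;
    rewrite ext1 /= in wi; by rewrite ?si ?wi ?orbT.
  move: hw' => /existsP [[[|[|//]] Hi]] /andP [si wi]; rewrite (bool_irrelevance Hi isT) in si wi;
  rewrite ext1 /= in wi; by rewrite ?si ?wi ?orbT.
clearbody q; case: C => [CI | [C1 C2]].
- have [[w wm Gw] [w' wm' Gw']] := key (fun i : 'I_2 => if val i == 0%N then 0 else 1) (oner_neq0 _).
  move: wm wm' Gw Gw' (CI w) (CI w'); rewrite /= eqxx /= => wK w'K; rewrite wK w'K => Gw Gw' /(_ isT) wB /(_ isT) w'B.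
  rewrite wB in Gw; rewrite w'B in Gw'; rewrite !mul0r !add0r !mul1r in Gw; rewrite !mul0r !add0r !mul1r in Gw'; rewrite !tR in Gw Gw'; lra.
- have [_ [w' wm' Gw']] := key (fun i : 'I_2 => if val i == 0%N then 0 else 1) (oner_neq0 _).
  have q1 : q <= 1.
    move: wm' Gw'; rewrite /= eqxx /= => wK; rewrite wK; case: (w' \in ev b) => /= ?; lra.
  have [[w wm Gw] _] := key (fun i : 'I_2 => if val i == 0%N then -1 else 1) (oner_neq0 _).
  apply/eqP; rewrite eq_le q1 /= leNgt; apply/negP => qlt.
  move: wm Gw; rewrite /= oppr_eq0 oner_neq0 /=.
  have c1 : (w \in cond a) ==> (w \in ev a) ==> ((w \in cond b) && (w \in ev b)).
    by apply/implyP => ?; apply/implyP; exact: C1.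
  have c2 : (w \in cond b) ==> ~~(w \in ev b) ==> ((w \in cond a) && ~~(w \in ev a)).
    by apply/implyP => ?; apply/implyP; exact: C2.
  move: c1 c2; case: (w \in cond a); case: (w \in ev a); case: (w \in cond b); case: (w \in ev b) => //= *; lra.
Qed.

Lemma condQ (a b : cevent Omega) : Cond a b -> iter_eq1 R b a.
Proof.
move=> C x y z mu coh.
have x0 : 0 <= x.
  case: (coh (fun i : 'I_4 => if val i == 0%N then 1 else 0)) => [|[w hw Gw] _]; first by exists (@Ordinal 4 0 isT); rewrite /= oner_neq0.
  move: hw => /existsP [[[|[|[|[|//]]]] Hi]] /=; rewrite ?eqxx //= ?oner_eq0 /= => wi; rewrite /iter_family_cond /= ?inE in wi.
  rewrite sum4 /iter_family_val /iter_family_cond /= !mul0r !addr0 mul1r wi in Gw.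
  move: Gw; case: (w \in ev a); rewrite ?tR ?fR => ?; lra.
have F12 : forall w, ((w \in cond a) ==> (w \in ev a) ==> (w \in cond b) ==> (w \in ev b)) &&
   (~~ (w \in cond a) ==> (w \in cond b) ==> (w \in ev b)).
  case: C => [CI | [C1 C2]] w.
    by case: (boolP (w \in cond b)) => wK; rewrite ?(CI _ wK) ?implybT //= !implybT.
  have c1 : (w \in cond a) ==> (w \in ev a) ==> ((w \in cond b) && (w \in ev b)).
    by apply/implyP => ?; apply/implyP; exact: C1.
  have c2 : (w \in cond b) ==> ~~(w \in ev b) ==> ((w \in cond a) && ~~(w \in ev a)).
    by apply/implyP => ?; apply/implyP; exact: C2.
  by move: c1 c2; case: (w \in cond a); case: (w \in ev a); case: (w \in cond b); case: (w \in ev b).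
have Fy : forall w, w \in cond a -> w \in ev a -> w \notin cond b -> y = 1.
  case: C => [CI | [C1 C2]] w wH wA wK; last by move: (C1 w wH wA); rewrite (negbTE wK).
  case: (coh (fun i : 'I_4 => if val i == 1%N then 1 else 0)) => [|[w1 hw Gw] [w2 hw' Gw']]; first by exists (@Ordinal 4 1 isT); rewrite /= oner_neq0.
  move: hw => /existsP [[[|[|[|[|//]]]] Hi]] /=; rewrite ?eqxx //= ?oner_eq0 /= => wi; rewrite /iter_family_cond /= ?inE in wi.
  move: hw' => /existsP [[[|[|[|[|//]]]] Hi']] /=; rewrite ?eqxx //= ?oner_eq0 /= => wi'; rewrite /iter_family_cond /= ?inE in wi'.
  rewrite sum4 /iter_family_val /iter_family_cond /= !mul0r add0r !addr0 mul1r wi (CI _ wi) in Gw.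
  rewrite sum4 /iter_family_val /iter_family_cond /= !mul0r add0r !addr0 mul1r wi' (CI _ wi') in Gw'.
  rewrite !tR in Gw Gw'; lra.
have cvy : forall w, conj_val a b x y z w = conj_val a b x 1 z w.
  move=> w; rewrite /conj_val; case: (boolP (w \in cond a)) => wH //; case: (boolP (w \in ev a)) => wA //.
  by case: (boolP (w \in cond b)) => wK //; rewrite (Fy w).
have ivy : forall w, iter_val b a x y z mu w = iter_val b a x 1 z mu w.
  by move=> w; rewrite /iter_val cvy.
have zx : z = x.
  pose s := fun i : 'I_4 => if val i == 0%N then 1 else if val i == 2%N then -1 else (0:R).
  have memx : forall v, [exists i, (s i != 0) && (v \in iter_family_cond b a x i)] -> (v \in cond a) || (v \in cond b).
    move=> v /existsP [[[|[|[|[|//]]]] Hi]]; rewrite /s /iter_family_cond /= ?inE ?eqxx //= => /andP [_ h]; by rewrite ?h ?orbT.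
  have step : forall v, [exists i, (s i != 0) && (v \in iter_family_cond b a x i)] ->
     \sum_(i < 4) s i * ((v \in iter_family_cond b a x i)%:R * (iter_family_val b a x y z mu i v - nth 0 [:: x; y; z; mu] i)) = z - x.
    move=> v /memx vm; rewrite sum4 /s /iter_family_val /iter_family_cond /= !mul0r ?add0r ?addr0 !inE cvy /conj_val.
    move: vm (F12 v); case: (v \in cond a); case: (v \in ev a); case: (v \in cond b); case: (v \in ev b) => //= _ _; rewrite ?tR ?fR; lra.
  case: (coh s) => [|[w hw Gw] [w' hw' Gw']]; first by exists (@Ordinal 4 0 isT); rewrite /s /= oner_neq0.
  move: Gw Gw'; rewrite /= step // step //; lra.
have mu1 : mu = 1.
  pose s := fun i : 'I_4 => if val i == 3%N then 1 else (0:R).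
  have step : forall v, [exists i, (s i != 0) && (v \in iter_family_cond b a x i)] ->
     exists2 c, 0 < c & \sum_(i < 4) s i * ((v \in iter_family_cond b a x i)%:R * (iter_family_val b a x y z mu i v - nth 0 [:: x; y; z; mu] i)) = c * (1 - mu).
    move=> v /existsP [[[|[|[|[|//]]]] Hi]]; rewrite /s /= ?eqxx //= oner_eq0 /= => vm.
    rewrite sum4 /s /iter_family_val /iter_family_cond /= !mul0r !add0r mul1r !inE in vm *.
    rewrite vm mul1r ivy /iter_val /conj_val /neg_val zx.
    move: vm (F12 v); rewrite /ce_val; case: (v \in cond a); case: (v \in ev a); case: (v \in cond b); case: (v \in ev b) => //= + _; rewrite ?tR ?fR ?eqxx //= => xn.
    1-9: first [exists 1; [exact: ltr01 | ring] | exists x; [by rewrite lt0r xn x0 | ring]].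
  case: (coh s) => [|[w hw Gw] [w' hw' Gw']]; first by exists (@Ordinal 4 3 isT); rewrite /s /= oner_neq0.
  have [c c0 e] := step w hw; have [c' c0' e'] := step w' hw'.
  move: Gw Gw'; rewrite /= e e' => h1 h2.
  have : 1 - mu <= 0 by rewrite -(pmulr_rle0 _ c0).
  have : 0 <= 1 - mu by rewrite -(pmulr_rge0 _ c0').
  lra.
move=> w; rewrite ivy /iter_val /conj_val /neg_val zx mu1.
move: (F12 w); case: (w \in cond a); case: (w \in ev a); case: (w \in cond b); case: (w \in ev b) => //= _; rewrite ?tR ?fR; lra.
Qed.
End Proofs.

Theorem mainTheorem3 (R : realFieldType) (Omega : finType)
    (c1 c2 c3 : cevent Omega)
    (hH1 : cond c1 != set0) (hH2 : cond c2 != set0) (hH3 : cond c3 != set0)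
    (hpc : p_consistent R (fun i : 'I_2 => if val i == 0%N then c1 else c2)) :
  p_entails R (fun _ : 'I_1 => quasi_conj c1 c2) c3 <->
  iter_eq1 R c3 (quasi_conj c1 c2).
Proof.
have F0 := @pc_ex R Omega c1 c2 hpc.
case: (@tri Omega (quasi_conj c1 c2) c3) => [C | bad].
  by split => _; [exact: (@condQ R Omega) | exact: (@condP R Omega)].
split => h; exfalso.
  exact: (@notP R Omega _ _ F0 bad h).
exact: (@notQ R Omega _ _ F0 bad h).
Qed.
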